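(* Let $\mathbb F\subseteq\mathbb R$ be a subfield and $X\subseteq\mathbb F^n$ such that $\operatorname{conv}_{\mathbb R}(X\cup\{0\})$ is a polyhedron. Then a nonempty subset $Y\subseteq X$ is a positive weak $\mathbb F$-face of $X$ if and only if there is a linear functional $\varphi\in(\mathbb R^n)^*$ which attains a maximum $M>0$ on $X$ with $Y=\{x\in X:\varphi(x)=M\}$. In particular, if $0$ lies in the relative interior of $\operatorname{conv}_{\mathbb R}(X)$, then a subset $Y\subseteq X$ is a positive weak $\mathbb F$-face of $X$ if and only if $Y\ne X$ and $Y$ is a weak $\mathbb F$-face of $X$.
   Context: $\operatorname{conv}_{\mathbb K}(X)$ ($\mathbb K=\mathbb F$ or $\mathbb R$) is the set of finite combinations $\sum r_sx_s$ with $x_s\in X$, $r_s\in\mathbb K\cap[0,\infty)$, $\sum r_s=1$; for $Y=\operatorname{conv}_{\mathbb K}(X)$, $\operatorname{relint}_{\mathbb K}(Y)=\{x\in Y:\forall y\in Y\ \exists z\in Y,\ t\in\mathbb K\cap(0,1),\ x=ty+(1-t)z\}$ (for $\mathbb K=\mathbb R$ and a polyhedron this is the usual relative interior). $Y\subseteq X$ is a weak $\mathbb F$-face of $X$ if for every $U\subseteq X$, $\operatorname{conv}_{\mathbb F}(Y)\cap\operatorname{relint}_{\mathbb F}(\operatorname{conv}_{\mathbb F}(U))\ne\emptyset$ implies $U\subseteq Y$; a weak $\mathbb F$-face $Y$ is a positive weak $\mathbb F$-face if for every $U\subseteq X$, $\operatorname{conv}_{\mathbb F}(Y)\cap\operatorname{relint}_{\mathbb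 F}(\operatorname{conv}_{\mathbb F}(U\cup\{0\}))=\emptyset$. A polyhedron is a finite intersection of closed affine half-spaces. *)

(* Defs.v *)
From Stdlib Require Fin.
From Stdlib Require Import Reals List.
Import ListNotations.
Open Scope R_scope.

Definition vec (n : nat) := Fin.t n -> R.

Definition vzero {n} : vec n := fun _ => 0.
Definition vadd {n} (x y : vec n) : vec n := fun i => x i + y i.
Definition vscale {n} (c : R) (x : vec n) : vec n := fun i => c * x i.

Definition is_subfield (F : R -> Prop) : Prop :=
  F 0 /\ F 1 /\
  (forall a b, F a -> F b -> F (a + b)) /\
  (forall a, F a -> F (- a)) /\
  (forall a b, F a -> F b -> F (a * b)) /\
  (forall a, F a -> a <> 0 -> F (/ a)).

Definition lincomb {n} (l : list (R * vec n)) : vec n :=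
  fold_right (fun p acc => vadd (vscale (fst p) (snd p)) acc) vzero l.
Definition coefsum {n} (l : list (R * vec n)) : R :=
  fold_right (fun p acc => fst p + acc) 0 l.

Definition conv {n} (K : R -> Prop) (X : vec n -> Prop) (v : vec n) : Prop :=
  exists l : list (R * vec n),
    Forall (fun p => X (snd p) /\ K (fst p) /\ 0 <= fst p) l /\
    coefsum l = 1 /\ v = lincomb l.

Definition relint {n} (K : R -> Prop) (Y : vec n -> Prop) (x : vec n) : Prop :=
  Y x /\
  forall y, Y y -> exists z t, Y z /\ K t /\ 0 < t /\ t < 1 /\
    x = vadd (vscale t y) (vscale (1 - t) z).

Definition allR : R -> Prop := fun _ => True.

Definition subset {n} (A B : vec n -> Prop) : Prop := forall x, A x -> B x.

Definition weak_face {n} (F : R -> Prop) (X Y : vec n -> Prop) : Prop :=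
  subset Y X /\
  forall U : vec n -> Prop, subset U X ->
    (exists v, conv F Y v /\ relint F (conv F U) v) -> subset U Y.

Definition pos_weak_face {n} (F : R -> Prop) (X Y : vec n -> Prop) : Prop :=
  weak_face F X Y /\
  forall U : vec n -> Prop, subset U X ->
    ~ (exists v, conv F Y v /\
         relint F (conv F (fun x => U x \/ x = vzero)) v).

Definition linear_functional {n} (phi : vec n -> R) : Prop :=
  (forall x y, phi (vadd x y) = phi x + phi y) /\
  (forall c x, phi (vscale c x) = c * phi x).

Definition polyhedron {n} (P : vec n -> Prop) : Prop :=
  exists hs : list ((vec n -> R) * R),
    (forall h, In h hs -> linear_functional (fst h)) /\
    forall x, P x <-> (forall h, In h hs -> fst h x <= snd h).

(* Main.v *)
Require Import Defs.
From Stdlib Require Import Reals List Lra Lia Psatz Classical FunctionalExtensionality PropExtensionality ClassicalEpsilon.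
Import ListNotations.
Open Scope R_scope.


Fixpoint sumk (k : nat) (f : nat -> R) : R :=
  match k with O => 0 | S k => sumk k f + f k end.

Lemma sumk_ext k f g : (forall j, (j < k)%nat -> f j = g j) -> sumk k f = sumk k g.
Proof. induction k; simpl; intros H; auto. rewrite IHk by (intros; apply H; lia). rewrite H by lia; auto. Qed.

Lemma sumk_plus k f g : sumk k (fun j => f j + g j) = sumk k f + sumk k g.
Proof. induction k; simpl; [ring|rewrite IHk; ring]. Qed.
Lemma sumk_scal k c f : sumk k (fun j => c * f j) = c * sumk k f.
Proof. induction k; simpl; [ring|rewrite IHk; ring]. Qed.
Lemma sumk_zero k : sumk k (fun _ => 0) = 0.
Proof. induction k; simpl; [ring|rewrite IHk; ring]. Qed.
Lemma sumk_le k f g : (forall j, (j < k)%nat -> f j <= g j) -> sumk k f <= sumk k g.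
Proof. induction k; simpl; intros H; [lra|]. assert (H1:=H k ltac:(lia)). assert (sumk k f <= sumk k g) by (apply IHk; intros; apply H; lia). lra. Qed.
Lemma sumk_abs k f : Rabs (sumk k f) <= sumk k (fun j => Rabs (f j)).
Proof. induction k; simpl. rewrite Rabs_R0; lra. eapply Rle_trans. apply Rabs_triang. lra. Qed.
Lemma sumk_shift k f : sumk (S k) f = f O + sumk k (fun j => f (S j)).
Proof. induction k; simpl in *. ring. rewrite IHk. ring. Qed.
Lemma sumk_nonneg k f : (forall j, (j < k)%nat -> 0 <= f j) -> 0 <= sumk k f.
Proof. intros H. rewrite <- (sumk_zero k). apply sumk_le. auto. Qed.
Lemma sumk_single_le k f j0 : (forall j, (j < k)%nat -> 0 <= f j) -> (j0 < k)%nat -> f j0 <= sumk k f.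
Proof. induction k; intros H Hj; [lia|]. simpl. destruct (Nat.eq_dec j0 k).
 subst. assert (0 <= sumk k f) by (apply sumk_nonneg; intros; apply H; lia). lra.
 assert (f j0 <= sumk k f) by (apply IHk; [intros; apply H; lia| lia]). assert (0 <= f k) by (apply H; lia). lra. Qed.
Lemma sumk_delta k j0 b : (j0 < k)%nat -> sumk k (fun j => if Nat.eqb j j0 then b else 0) = b.
Proof. induction k; intros Hj; [lia|]. simpl. destruct (Nat.eq_dec j0 k).
 subst. rewrite Nat.eqb_refl. rewrite (sumk_ext k _ (fun _ => 0)). rewrite sumk_zero; ring.
 intros j Hj'. destruct (Nat.eqb_spec j k); [lia|auto].
 rewrite IHk by lia. destruct (Nat.eqb_spec k j0); [lia|ring]. Qed.

Lemma F0 F : is_subfield F -> F 0. Proof. intros H; apply H. Qed.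
Lemma F1 F : is_subfield F -> F 1. Proof. intros H; apply H. Qed.
Lemma Fadd F a b : is_subfield F -> F a -> F b -> F (a+b). Proof. intros H; apply H. Qed.
Lemma Fopp F a : is_subfield F -> F a -> F (-a). Proof. intros H; apply H. Qed.
Lemma Fmul F a b : is_subfield F -> F a -> F b -> F (a*b). Proof. intros H; apply H. Qed.
Lemma Finv F a : is_subfield F -> F a -> a <> 0 -> F (/a). Proof. intros H; apply H. Qed.
Lemma Fsub F a b : is_subfield F -> F a -> F b -> F (a-b).
Proof. intros H Ha Hb. unfold Rminus. apply Fadd; auto. apply Fopp; auto. Qed.
Lemma Fdiv F a b : is_subfield F -> F a -> F b -> b <> 0 -> F (a/b).
Proof. intros H Ha Hb Hb0. unfold Rdiv. apply Fmul; auto. apply Finv; auto. Qed.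
Lemma FINR F m : is_subfield F -> F (INR m).
Proof. intros H; induction m. simpl. apply (F0 F); auto. rewrite S_INR. apply Fadd; auto. apply F1; auto. Qed.
Lemma FIZR F z : is_subfield F -> F (IZR z).
Proof. intros H. destruct z. apply (F0 F); auto. change (IZR (Zpos p)) with (IPR p). rewrite <- INR_IPR. apply FINR; auto.
 rewrite IZR_NEG. change (IZR (Zpos p)) with (IPR p). rewrite <- INR_IPR. apply Fopp; auto. apply FINR; auto. Qed.
Lemma Fhalf F : is_subfield F -> F (/2).
Proof. intros H. apply Finv; auto. replace 2 with (INR 2) by (simpl; ring). apply FINR; auto. Qed.
Lemma Fsumk F k f : is_subfield F -> (forall j, (j<k)%nat -> F (f j)) -> F (sumk k f).
Proof. intros H; induction k; simpl; intros Hf. apply F0; auto. apply Fadd; auto. Qed.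

Lemma F_dense F x eps : is_subfield F -> 0 < eps -> exists q, F q /\ Rabs (q - x) < eps.
Proof. intros HF Heps. destruct (archimed_cor1 eps Heps) as [N [HN HN0]].
 assert (HNp : 0 < INR N) by (apply lt_0_INR; auto).
 destruct (archimed (x * INR N)) as [H1 H2].
 exists (IZR (up (x * INR N)) / INR N). split. apply Fdiv; auto. apply FIZR; auto. apply FINR; auto. lra.
 assert (E: IZR (up (x * INR N)) / INR N - x = (IZR (up (x * INR N)) - x * INR N) / INR N) by (field; lra).
 rewrite E. rewrite Rabs_right. apply Rle_lt_trans with (1 / INR N).
 unfold Rdiv. apply Rmult_le_compat_r. left; apply Rinv_0_lt_compat; auto. lra. lra.
 apply Rle_ge. unfold Rdiv. apply Rmult_le_pos. lra. left; apply Rinv_0_lt_compat; auto. Qed.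

Lemma F_small F d : is_subfield F -> 0 < d -> exists e, F e /\ 0 < e /\ e < d.
Proof. intros HF Hd. destruct (archimed_cor1 d Hd) as [N [HN HN0]].
 exists (/ INR N). split. apply Finv; auto. apply FINR; auto. apply not_0_INR; lia.
 split; auto. apply Rinv_0_lt_compat, lt_0_INR; auto. Qed.

Ltac fsolve HF := repeat (match goal with
  | |- ?F (_ - _) => apply (Fsub F _ _ HF)
  | |- ?F (_ + _) => apply (Fadd F _ _ HF)
  | |- ?F (_ * _) => apply (Fmul F _ _ HF)
  | |- ?F (_ / _) => apply (Fdiv F _ _ HF)
  | |- ?F (/ _) => apply (Finv F _ HF)
  | |- ?F (- _) => apply (Fopp F _ HF)
  | |- ?F 0 => apply (F0 F HF)
  | |- ?F 1 => apply (F1 F HF)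
  | |- ?F (IZR _) => apply (FIZR F _ HF)
  | |- ?F (INR _) => apply (FINR F _ HF)
  end); auto.

Lemma approx F : is_subfield F -> forall k (E : Type) (a : E -> nat -> R) (b : E -> R) (lam : nat -> R),
 (forall e j, F (a e j)) -> (forall e, F (b e)) ->
 (forall e, sumk k (fun j => a e j * lam j) = b e) ->
 forall eps, 0 < eps -> exists mu : nat -> R,
   (forall j, (j < k)%nat -> F (mu j) /\ Rabs (mu j - lam j) < eps) /\
   (forall e, sumk k (fun j => a e j * mu j) = b e).
Proof.
 intros HF k. induction k as [|k IH]; intros E a b lam Ha Hb Hs eps Heps.
 - exists lam. split; [intros; lia|]. intros e. rewrite <- (Hs e). reflexivity.
 - destruct (classic (exists e0, a e0 k <> 0)) as [[e0 He0]|Hno].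
   + set (a0 := a e0 k). assert (Fa0 : F a0) by apply Ha. assert (Ha0 : a0 <> 0) by exact He0.
     set (a' := fun e j => a e j - a e k * a e0 j / a0).
     set (b' := fun e => b e - a e k * b e0 / a0).
     assert (Ha' : forall e j, F (a' e j)).
     { intros e j. unfold a'. fsolve HF. }
     assert (Hb' : forall e, F (b' e)).
     { intros e. unfold b'. fsolve HF. }
     assert (Hs' : forall e, sumk k (fun j => a' e j * lam j) = b' e).
     { intros e. unfold a', b'.
       rewrite (sumk_ext k _ (fun j => a e j * lam j + (- (a e k / a0)) * (a e0 j * lam j))) by (intros; unfold a0 in *; field; auto).
       rewrite sumk_plus, sumk_scal.
       assert (H1 := Hs e). assert (H2 := Hs e0). simpl in H1, H2.
       replace (sumk k (fun j => a e j * lam j)) with (b e - a e k * lam k) by lra.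
       replace (sumk k (fun j => a e0 j * lam j)) with (b e0 - a e0 k * lam k) by lra.
       unfold a0; field; auto. }
     set (C := sumk k (fun j => Rabs (a e0 j / a0))).
     assert (HC : 0 <= C) by (apply sumk_nonneg; intros; apply Rabs_pos).
     destruct (IH E a' b' lam Ha' Hb' Hs' (eps / (1 + C))) as [mu0 [Hmu0 Hmu0s]].
     { apply Rdiv_lt_0_compat; lra. }
     set (xk := (b e0 - sumk k (fun j => a e0 j * mu0 j)) / a0).
     exists (fun j => if Nat.eqb j k then xk else mu0 j). split.
     * intros j Hj. destruct (Nat.eqb_spec j k).
       -- subst j. split.
          ++ unfold xk. fsolve HF. apply Fsumk; auto. intros; fsolve HF. apply Hmu0; auto.
          ++ assert (H2 := Hs e0). simpl in H2.
             assert (E1 : xk - lam k = sumk k (fun j => (a e0 j / a0) * (lam j - mu0 j))).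
             { unfold xk. rewrite (sumk_ext k (fun j => (a e0 j / a0) * (lam j - mu0 j)) (fun j => (/a0) * (a e0 j * lam j) + (- / a0) * (a e0 j * mu0 j))) by (intros; field; auto).
               rewrite sumk_plus, !sumk_scal. replace (sumk k (fun j => a e0 j * lam j)) with (b e0 - a e0 k * lam k) by lra.
               unfold a0; field; auto. }
             rewrite E1. eapply Rle_lt_trans. apply sumk_abs.
             apply Rle_lt_trans with (sumk k (fun j => Rabs (a e0 j / a0) * (eps / (1 + C)))).
             apply sumk_le. intros j Hj'. rewrite Rabs_mult. apply Rmult_le_compat_l. apply Rabs_pos.
             rewrite Rabs_minus_sym. left; apply Hmu0; lia.
             rewrite (sumk_ext k _ (fun j => (eps / (1+C)) * Rabs (a e0 j / a0))) by (intros; ring).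
             rewrite sumk_scal. fold C.
             apply Rmult_lt_reg_r with (1 + C). lra.
             replace (eps / (1 + C) * C * (1 + C)) with (eps * C) by (field; lra). nra.
       -- destruct (Hmu0 j ltac:(lia)) as [Hm1 Hm2]. split; auto.
          assert (eps / (1 + C) <= eps). { apply Rmult_le_reg_r with (1+C). lra. unfold Rdiv. rewrite Rmult_assoc, Rinv_l by lra. nra. }
          lra.
     * intros e. simpl. rewrite Nat.eqb_refl.
       rewrite (sumk_ext k _ (fun j => a e j * mu0 j)).
       2:{ intros j Hj. destruct (Nat.eqb_spec j k); [lia|auto]. }
       assert (H3 := Hmu0s e). unfold a', b' in H3.
       rewrite (sumk_ext k _ (fun j => a e j * mu0 j + (- (a e k / a0)) * (a e0 j * mu0 j))) in H3 by (intros; unfold a0 in *; field; auto).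
       rewrite sumk_plus, sumk_scal in H3.
       unfold xk. apply Rminus_diag_uniq. 
       replace (sumk k (fun j => a e j * mu0 j)) with (b e - a e k * b e0 / a0 + (a e k / a0) * sumk k (fun j => a e0 j * mu0 j)) by lra.
       unfold a0; field; auto.
   + assert (Hz : forall e, a e k = 0).
     { intros e. apply NNPP. intros H. apply Hno. exists e. auto. }
     destruct (IH E a b lam Ha Hb) with (eps := eps) as [mu0 [Hmu0 Hmu0s]]; auto.
     { intros e. rewrite <- (Hs e). simpl. rewrite Hz. ring. }
     destruct (F_dense F (lam k) eps HF Heps) as [q [Hq Hq2]].
     exists (fun j => if Nat.eqb j k then q else mu0 j). split.
     * intros j Hj. destruct (Nat.eqb_spec j k). subst; auto. apply Hmu0; lia.
     * intros e. simpl. rewrite Hz. rewrite <- (Hmu0s e).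
       rewrite (sumk_ext k _ (fun j => a e j * mu0 j)). ring.
       intros j Hj. destruct (Nat.eqb_spec j k); [lia|auto].
Qed.

Lemma vext {n} (x y : vec n) : (forall i, x i = y i) -> x = y.
Proof. intros H; apply functional_extensionality; auto. Qed.

Definition d0 {n} : R * vec n := (0, vzero).

Lemma list_sumk {A} (g : A -> R) (L : list A) d :
  fold_right (fun p a => g p + a) 0 L = sumk (length L) (fun j => g (nth j L d)).
Proof. induction L. simpl; auto. cbn [length fold_right]. rewrite sumk_shift. cbn [nth]. rewrite IHL. auto. Qed.

Lemma lincomb_pt {n} (L : list (R * vec n)) i :
  lincomb L i = fold_right (fun p a => fst p * snd p i + a) 0 L.
Proof. induction L; simpl. reflexivity. unfold vadd, vscale. rewrite <- IHL. reflexivity. Qed.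

Lemma coefsum_fold {n} (L : list (R * vec n)) : coefsum L = fold_right (fun p a => fst p + a) 0 L.
Proof. reflexivity. Qed.

Lemma coefsum_sumk {n} (L : list (R * vec n)) : coefsum L = sumk (length L) (fun j => fst (nth j L d0)).
Proof. rewrite coefsum_fold. apply (list_sumk (fun p => fst p)). Qed.
Lemma lincomb_sumk {n} (L : list (R * vec n)) i : lincomb L i = sumk (length L) (fun j => fst (nth j L d0) * snd (nth j L d0) i).
Proof. rewrite lincomb_pt. apply (list_sumk (fun p => fst p * snd p i)). Qed.

Fixpoint recoef {n} (mu : nat -> R) (L : list (R * vec n)) : list (R * vec n) :=
  match L with [] => [] | p :: L' => (mu O, snd p) :: recoef (fun j => mu (S j)) L' end.

Lemma recoef_len {n} mu (L : list (R * vec n)) : length (recoef mu L) = length L.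
Proof. revert mu; induction L; simpl; intros; auto. Qed.
Lemma recoef_nth {n} mu (L : list (R * vec n)) j : (j < length L)%nat -> nth j (recoef mu L) d0 = (mu j, snd (nth j L d0)).
Proof. revert mu j; induction L; simpl; intros mu j Hj. lia. destruct j. auto. apply (IHL (fun j => mu (S j)) j). lia. Qed.
Lemma recoef_snd {n} mu (L : list (R * vec n)) : map snd (recoef mu L) = map snd L.
Proof. revert mu; induction L; simpl; intros; auto. f_equal. auto. Qed.

Lemma Forall_nth {A} (P : A -> Prop) L d : (forall j, (j < length L)%nat -> P (nth j L d)) -> Forall P L.
Proof. intros H. apply Forall_forall. intros x Hx. destruct (In_nth L x d Hx) as [j [Hj Hx']]. subst. auto. Qed.
Lemma nth_Forall {A} (P : A -> Prop) L d j : Forall P L -> (j < length L)%nat -> P (nth j L d).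
Proof. intros H Hj. rewrite Forall_forall in H. apply H. apply nth_In; auto. Qed.

Lemma minpos {n} (L : list (R * vec n)) : Forall (fun p => 0 < fst p) L ->
  exists m, 0 < m /\ forall j, (j < length L)%nat -> m <= fst (nth j L d0).
Proof. induction L; intros H. exists 1; split; [lra|simpl; intros; lia].
 inversion H; subst. destruct IHL as [m [Hm Hm2]]; auto.
 exists (Rmin m (fst a)). split. apply Rmin_glb_lt; auto. intros j Hj. destruct j; simpl.
 apply Rmin_r. eapply Rle_trans. apply Rmin_l. apply Hm2. simpl in Hj; lia. Qed.

Lemma Frat F n (L : list (R * vec n)) (c : vec n) : is_subfield F ->
  Forall (fun p => 0 < fst p /\ forall i, F (snd p i)) L -> coefsum L = 1 -> lincomb L = c ->
  (forall i, F (c i)) ->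
  exists mu : nat -> R, Forall (fun p => F (fst p) /\ 0 < fst p) (recoef mu L) /\
    coefsum (recoef mu L) = 1 /\ lincomb (recoef mu L) = c.
Proof.
 intros HF HL Hs Hc HcF.
 set (k := length L).
 set (a := fun (e : option (Fin.t n)) j => match e with None => 1 | Some i => snd (nth j L d0) i end).
 set (b := fun (e : option (Fin.t n)) => match e with None => 1 | Some i => c i end).
 set (lam := fun j => fst (nth j L (@d0 n))).
 assert (HFp : forall j i, F (snd (nth j L d0) i)).
 { intros j i. destruct (Nat.lt_ge_cases j (length L)).
   apply (nth_Forall _ L d0 j HL H). rewrite nth_overflow by auto. simpl. apply (F0 F HF). }
 destruct (minpos L) as [m [Hm Hm2]].
 { eapply Forall_impl; [|exact HL]. simpl; intros p [Hp _]; auto. }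
 destruct (approx F HF k _ a b lam) with (eps := m) as [mu [Hmu Hmus]]; auto.
 - intros [i|] j; simpl; auto. apply (F1 F HF).
 - intros [i|]; simpl; auto. apply (F1 F HF).
 - intros [i|]; simpl.
   + rewrite <- Hc, lincomb_sumk. apply sumk_ext. intros; unfold lam; ring.
   + transitivity (coefsum L); [|auto]. rewrite coefsum_sumk. apply sumk_ext. intros; unfold lam; ring.
 - exists mu. split; [|split].
   + apply Forall_nth with d0. rewrite recoef_len. intros j Hj. rewrite recoef_nth by auto. simpl.
     destruct (Hmu j Hj) as [H1 H2]. split; auto. assert (H3 := Hm2 j Hj). fold (lam j) in H3.
     apply Rabs_def2 in H2. lra.
   + rewrite coefsum_sumk, recoef_len. transitivity (sumk k (fun j => a None j * mu j)); [|apply Hmus]. apply sumk_ext. intros j Hj.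
     rewrite recoef_nth by auto. simpl. ring.
   + apply vext. intros i. rewrite lincomb_sumk, recoef_len. transitivity (sumk k (fun j => a (Some i) j * mu j)); [|apply Hmus]. apply sumk_ext. intros j Hj.
     rewrite recoef_nth by auto. simpl. ring.
Qed.

Lemma aggr F n (L Ly : list (R * vec n)) : is_subfield F ->
  Forall (fun p => In (snd p) (map snd L) /\ F (fst p) /\ 0 <= fst p) Ly ->
  exists nu : nat -> R, (forall j, (j < length L)%nat -> F (nu j) /\ 0 <= nu j) /\
    sumk (length L) nu = coefsum Ly /\
    forall i, sumk (length L) (fun j => nu j * snd (nth j L d0) i) = lincomb Ly i.
Proof.
 intros HF. induction Ly as [|[be p] Ly IH]; intros H.
 - exists (fun _ => 0). split; [|split].
   + intros; split; [apply (F0 F HF)|lra].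
   + apply sumk_zero.
   + intros i. rewrite (sumk_ext _ _ (fun _ => 0)) by (intros; ring). apply sumk_zero.
 - inversion H as [|? ? [Hp [Hb Hb0]] HLy]; subst. simpl in Hp, Hb, Hb0.
   destruct IH as [nu [Hnu [Hnus Hnul]]]; auto.
   destruct (In_nth (map snd L) p vzero Hp) as [j0 [Hj0 Hpj0]]. rewrite length_map in Hj0.
   replace (@vzero n) with (snd (@d0 n)) in Hpj0 by reflexivity. rewrite map_nth in Hpj0.
   exists (fun j => nu j + if Nat.eqb j j0 then be else 0). split; [|split].
   + intros j Hj. destruct (Hnu j Hj). destruct (Nat.eqb j j0); (split; [fsolve HF|lra]).
   + rewrite sumk_plus, sumk_delta by auto. rewrite Hnus. simpl. ring.
   + intros i. rewrite (sumk_ext _ _ (fun j => nu j * snd (nth j L d0) i + (if Nat.eqb j j0 then be * p i else 0))).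
     rewrite sumk_plus, sumk_delta by auto. rewrite Hnul. rewrite !lincomb_pt. simpl. ring.
     intros j Hj. destruct (Nat.eqb_spec j j0). subst. ring. ring.
Qed.

Lemma minF F n (L : list (R * vec n)) : is_subfield F -> Forall (fun p => F (fst p) /\ 0 < fst p) L -> L <> [] ->
  exists m, F m /\ 0 < m /\ forall j, (j < length L)%nat -> m <= fst (nth j L d0).
Proof. intros HF. induction L as [|a L IH]; intros H Hne. congruence.
 inversion H as [|? ? [Ha1 Ha2] HL]; subst. destruct L as [|b L'].
 - exists (fst a). split; auto. split; auto. simpl. intros j Hj. destruct j. lra. lia.
 - destruct IH as [m [Hm1 [Hm2 Hm3]]]; auto. congruence.
   exists (Rmin m (fst a)). split; [|split].
   + unfold Rmin. destruct (Rle_dec m (fst a)); auto.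
   + apply Rmin_glb_lt; auto.
   + intros j Hj. destruct j. simpl. apply Rmin_r. eapply Rle_trans. apply Rmin_l. apply (Hm3 j). simpl in *; lia.
Qed.

Lemma Relint F n (L : list (R * vec n)) (c : vec n) : is_subfield F ->
  Forall (fun p => F (fst p) /\ 0 < fst p) L -> coefsum L = 1 -> lincomb L = c ->
  relint F (conv F (fun p => In p (map snd L))) c.
Proof.
 intros HF HL Hs Hc. set (k := length L).
 assert (HLF : forall j, (j < k)%nat -> F (fst (nth j L d0)) /\ 0 < fst (nth j L d0)).
 { intros j Hj. apply (nth_Forall _ L d0 j HL Hj). }
 assert (HSin : forall j, (j < k)%nat -> In (snd (nth j L d0)) (map snd L)).
 { intros j Hj. apply in_map. apply nth_In. auto. }
 split.
 - exists L. split; [|split; auto].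
   apply Forall_forall. intros p Hp. rewrite Forall_forall in HL. destruct (HL p Hp). split; [apply in_map; auto|split; auto; lra].
 - intros y [Ly [HLy [HLys HLyc]]].
   destruct (aggr F n L Ly HF HLy) as [nu [Hnu [Hnus Hnul]]]. fold k in Hnu, Hnus, Hnul.
   assert (Hne : L <> []). { intros E. rewrite E in Hs. simpl in Hs. lra. }
   destruct (minF F n L HF HL Hne) as [m [Hm1 [Hm2 Hm3]]]. fold k in Hm3.
   assert (Hk : (0 < k)%nat). { unfold k; destruct L; simpl; [congruence|lia]. }
   assert (Hm1' : m <= 1).
   { eapply Rle_trans. apply (Hm3 0%nat Hk). rewrite <- Hs, coefsum_sumk. apply (sumk_single_le _ (fun j => fst (nth j L d0))); auto.
     intros j Hj. left; apply HLF; auto. }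
   assert (Hnu1 : forall j, (j < k)%nat -> nu j <= 1).
   { intros j Hj. rewrite <- HLys, <- Hnus. apply (sumk_single_le _ nu); auto. intros; apply Hnu; auto. }
   set (t := m / 2).
   set (mu := fun j => (fst (nth j L d0) - t * nu j) / (1 - t)).
   exists (lincomb (recoef mu L)), t. split; [|split; [|split; [|split]]].
   + exists (recoef mu L). split; [|split; auto].
     * apply Forall_nth with d0. rewrite recoef_len. intros j Hj. rewrite recoef_nth by auto. simpl.
       split; [apply HSin; auto|]. destruct (HLF j Hj). destruct (Hnu j Hj). assert (Hm3j := Hm3 j Hj). assert (Hn1 := Hnu1 j Hj).
       split. unfold mu, t. fsolve HF; lra.
       unfold mu. apply Rmult_le_pos. unfold t; nra. left; apply Rinv_0_lt_compat. unfold t; lra.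
     * rewrite coefsum_sumk, recoef_len. fold k.
       rewrite (sumk_ext _ _ (fun j => (/(1-t)) * fst (nth j L d0) + (- t / (1 - t)) * nu j)).
       rewrite sumk_plus, !sumk_scal, Hnus, HLys. rewrite coefsum_sumk in Hs. fold k in Hs. rewrite Hs. field. unfold t; lra.
       intros j Hj. rewrite recoef_nth by auto. simpl. unfold mu. field. unfold t; lra.
   + unfold t. fsolve HF; lra.
   + unfold t; lra.
   + unfold t; lra.
   + rewrite <- Hc. apply vext. intros i. unfold vadd, vscale. rewrite HLyc, <- Hnul.
     rewrite !lincomb_sumk, recoef_len. fold k.
     rewrite <- !sumk_scal, <- sumk_plus. apply sumk_ext. intros j Hj. rewrite recoef_nth by auto. simpl. unfold mu. field. unfold t; lra.
Qed.

Definition sc {n} (a : R) (L : list (R * vec n)) := map (fun p => (a * fst p, snd p)) L.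

Lemma coefsum_sc {n} a (L : list (R * vec n)) : coefsum (sc a L) = a * coefsum L.
Proof. induction L; simpl. ring. unfold coefsum in *. simpl. rewrite IHL. ring. Qed.
Lemma lincomb_sc {n} a (L : list (R * vec n)) : lincomb (sc a L) = vscale a (lincomb L).
Proof. apply vext; intros i. unfold vscale. rewrite !lincomb_pt. induction L as [|q L IH]; simpl. ring. rewrite IH, Rmult_plus_distr_l, Rmult_assoc. reflexivity. Qed.
Lemma coefsum_app {n} (L1 L2 : list (R * vec n)) : coefsum (L1 ++ L2) = coefsum L1 + coefsum L2.
Proof. induction L1; simpl. ring. unfold coefsum in *. simpl. rewrite IHL1. ring. Qed.
Lemma lincomb_app {n} (L1 L2 : list (R * vec n)) : lincomb (L1 ++ L2) = vadd (lincomb L1) (lincomb L2).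
Proof. apply vext; intros i. unfold vadd. rewrite !lincomb_pt. induction L1; simpl. ring. rewrite IHL1. ring. Qed.
Lemma sc_snd {n} a (L : list (R * vec n)) : map snd (sc a L) = map snd L.
Proof. unfold sc. rewrite map_map. reflexivity. Qed.
Lemma Forall_sc {n} a (L : list (R * vec n)) (P : vec n -> Prop) : 0 <= a ->
  Forall (fun p => P (snd p) /\ 0 <= fst p) L -> Forall (fun p => P (snd p) /\ 0 <= fst p) (sc a L).
Proof. intros Ha H. unfold sc. apply Forall_map. eapply Forall_impl; [|exact H]. simpl. intros p [H1 H2]; split; auto. nra. Qed.

Definition posf {n} (L : list (R * vec n)) := filter (fun p => if Rlt_dec 0 (fst p) then true else false) L.

Lemma posf_ok {n} (L : list (R * vec n)) : Forall (fun p => 0 <= fst p) L ->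
  coefsum (posf L) = coefsum L /\ lincomb (posf L) = lincomb L.
Proof. induction L as [|a L IH]; intros H. simpl; auto. inversion H; subst. destruct IH as [IH1 IH2]; auto.
 unfold posf in *. simpl. destruct (Rlt_dec 0 (fst a)).
 - unfold coefsum, lincomb in *. simpl. rewrite IH1, IH2. auto.
 - assert (fst a = 0) by lra. unfold coefsum, lincomb in *. simpl. rewrite IH1, IH2. split. rewrite H0; ring.
   apply vext; intros i. unfold vadd, vscale. rewrite H0. ring. Qed.

Lemma pipe F n (Q : vec n -> Prop) (L : list (R * vec n)) (v x : vec n) al : is_subfield F ->
  (forall p, Q p -> forall i, F (p i)) ->
  Forall (fun p => Q (snd p) /\ 0 <= fst p) L -> coefsum L = 1 -> lincomb L = v -> (forall i, F (v i)) ->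
  In (al, x) L -> 0 < al ->
  exists Lq : list (R * vec n), (forall p, In p (map snd Lq) -> Q p) /\ In x (map snd Lq) /\
    relint F (conv F (fun p => In p (map snd Lq))) v.
Proof.
 intros HF HQ HL Hs Hv HvF Hx Hal.
 destruct (posf_ok L) as [Hp1 Hp2]. { eapply Forall_impl; [|exact HL]. simpl; tauto. }
 assert (HinP : forall p, In p (posf L) <-> In p L /\ 0 < fst p).
 { intros p. unfold posf. rewrite filter_In. destruct (Rlt_dec 0 (fst p)) as [h|h]; split; intros [h1 h2]; split; auto; try discriminate; contradiction. }
 rewrite Forall_forall in HL.
 destruct (Frat F n (posf L) v HF) as [mu [Hm1 [Hm2 Hm3]]]; auto.
 { apply Forall_forall. intros p Hp. apply HinP in Hp. destruct Hp. split; auto. apply HQ. apply HL; auto. }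
 congruence. congruence.
 exists (recoef mu (posf L)). rewrite recoef_snd. split; [|split].
 - intros p Hp. apply in_map_iff in Hp. destruct Hp as [q [Hq1 Hq2]]. subst. apply HinP in Hq2. apply HL. tauto.
 - change x with (snd (al, x)). apply in_map. apply HinP. auto.
 - rewrite <- (recoef_snd mu (posf L)). apply Relint; auto.
Qed.

Lemma lf_zero {n} (phi : vec n -> R) : linear_functional phi -> phi vzero = 0.
Proof. intros [_ H]. replace (@vzero n) with (vscale 0 (@vzero n)). rewrite H. ring. apply vext; intros; unfold vscale, vzero; ring. Qed.

Lemma lf_lincomb {n} (phi : vec n -> R) L : linear_functional phi ->
  phi (lincomb L) = fold_right (fun p a => fst p * phi (snd p) + a) 0 L.
Proof. intros Hl. induction L; simpl. apply lf_zero; auto. destruct Hl as [Ha Hs]. unfold lincomb in *. simpl. rewrite Ha, Hs, IHL. auto. Qed.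

Lemma lf_le {n} (phi : vec n -> R) L M : linear_functional phi ->
  Forall (fun p => phi (snd p) <= M /\ 0 <= fst p) L -> phi (lincomb L) <= coefsum L * M.
Proof. intros Hl H. rewrite lf_lincomb by auto. induction L; simpl. unfold coefsum; simpl; lra.
 apply Forall_cons_iff in H; destruct H as [[Ha1 Ha2] HL']. unfold coefsum in *; simpl. assert (H5 := IHL HL'). nra. Qed.

Lemma lf_eq {n} (phi : vec n -> R) L M : linear_functional phi ->
  Forall (fun p => phi (snd p) = M) L -> phi (lincomb L) = coefsum L * M.
Proof. intros Hl H. rewrite lf_lincomb by auto. induction L; simpl. unfold coefsum; simpl; lra.
 apply Forall_cons_iff in H; destruct H as [Ha1 HL']. unfold coefsum in *; simpl. rewrite IHL by auto. rewrite Ha1. ring. Qed.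

Lemma conv_F_coords F n (S : vec n -> Prop) v : is_subfield F -> (forall p, S p -> forall i, F (p i)) ->
  conv F S v -> forall i, F (v i).
Proof. intros HF HS [L [HL [_ Hv]]] i. subst. rewrite lincomb_pt. induction L; simpl. fsolve HF.
 apply Forall_cons_iff in HL; destruct HL as [[Ha1 [Ha2 Ha3]] HL']. fsolve HF. Qed.

Lemma set_ext {n} (S1 S2 : vec n -> Prop) : (forall p, S1 p <-> S2 p) -> S1 = S2.
Proof. intros H. apply functional_extensionality. intros p. apply propositional_extensionality. auto. Qed.

Lemma lincomb_single {n} a (y : vec n) : lincomb [(a, y)] = vscale a y.
Proof. apply vext; intros i. unfold lincomb, vadd, vscale, vzero; simpl. ring. Qed.

Lemma conv_single F n (S : vec n -> Prop) u : is_subfield F -> S u -> conv F S u.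
Proof. intros HF Hu. exists [(1, u)]. split; [|split].
 - constructor; [|constructor]. simpl. split; auto. split. apply (F1 F HF). lra.
 - unfold coefsum; simpl; ring.
 - rewrite lincomb_single. apply vext; intros; unfold vscale; ring. Qed.

Lemma lf_vadd {n} (phi : vec n -> R) a x b y : linear_functional phi ->
  phi (vadd (vscale a x) (vscale b y)) = a * phi x + b * phi y.
Proof. intros [H1 H2]. rewrite H1, !H2. auto. Qed.

Lemma conv_le F n (phi : vec n -> R) (S : vec n -> Prop) M v : linear_functional phi ->
  (forall p, S p -> phi p <= M) -> conv F S v -> phi v <= M.
Proof. intros Hl HS [L [HL [Hs Hv]]]. subst. replace M with (coefsum L * M) by (rewrite Hs; ring).
 apply lf_le; auto. eapply Forall_impl; [|exact HL]. simpl. intros p [H1 [H2 H3]]. auto. Qed.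

Lemma conv_eq F n (phi : vec n -> R) (S : vec n -> Prop) M v : linear_functional phi ->
  (forall p, S p -> phi p = M) -> conv F S v -> phi v = M.
Proof. intros Hl HS [L [HL [Hs Hv]]]. subst. replace M with (coefsum L * M) by (rewrite Hs; ring).
 apply lf_eq; auto. eapply Forall_impl; [|exact HL]. simpl. intros p [H1 [H2 H3]]. auto. Qed.

Lemma easy_dir n F (X Y : vec n -> Prop) : is_subfield F -> subset Y X ->
  (exists (phi : vec n -> R) (M : R),
        linear_functional phi /\ 0 < M /\
        (forall x, X x -> phi x <= M) /\ (exists x, X x /\ phi x = M) /\
        (forall x, Y x <-> (X x /\ phi x = M))) -> pos_weak_face F X Y.
Proof.
 intros HF HYX [phi [M [Hl [HM [Hle [_ HY]]]]]]. split; [split; auto|].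
 - intros U HUX [v [Hv [Hv1 Hv2]]] u Hu.
   destruct (Hv2 u (conv_single F n U u HF Hu)) as [z [t [Hz [Ht [Ht0 [Ht1 Hvz]]]]]].
   assert (E1 : phi v = M). { apply (conv_eq F n phi Y M v Hl); auto. intros p Hp. apply HY; auto. }
   assert (E2 : phi z <= M). { apply (conv_le F n phi U M z Hl); auto. }
   assert (E3 : phi u <= M) by (apply Hle; auto).
   rewrite Hvz, lf_vadd in E1 by auto.
   apply HY. split; auto. nra.
 - intros U HUX [v [Hv Hrel]].
   destruct (proj2 Hrel vzero (conv_single F n _ vzero HF (or_intror eq_refl))) as [z [t [Hz [Ht [Ht0 [Ht1 Hvz]]]]]].
   assert (E1 : phi v = M). { apply (conv_eq F n phi Y M v Hl); auto. intros p Hp. apply HY; auto. }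
   assert (E2 : phi z <= M). { apply (conv_le F n phi (fun x => U x \/ x = vzero) M z Hl); auto. intros p [Hp|Hp]. auto. subst. rewrite lf_zero; auto; lra. }
   rewrite Hvz, lf_vadd, lf_zero in E1 by auto. nra.
Qed.

Lemma dec (P : Prop) : {P} + {~ P}.
Proof. destruct (constructive_indefinite_description (fun b : bool => if b then P else ~ P)) as [[|] H].
 - destruct (classic P); [exists true|exists false]; auto.
 - left; auto.
 - right; auto.
Defined.

Lemma delta_list {A} (l : list A) (P : A -> R -> Prop) :
  (forall a, In a l -> exists d, 0 < d /\ forall e, 0 < e < d -> P a e) ->
  exists d, 0 < d /\ forall e, 0 < e < d -> forall a, In a l -> P a e.
Proof. induction l as [|a l IH]; intros H. exists 1. split. lra. intros e _ a []. 
 destruct IH as [d1 [Hd1 H1]]. intros b Hb; apply H; right; auto.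
 destruct (H a (or_introl eq_refl)) as [d2 [Hd2 H2]].
 exists (Rmin d1 d2). split. apply Rmin_glb_lt; auto. intros e He b [Hb|Hb].
 subst. apply H2. split. lra. eapply Rlt_le_trans. apply He. apply Rmin_r.
 apply H1; auto. split. lra. eapply Rlt_le_trans. apply He. apply Rmin_l. Qed.

Definition Tt {n} (Y : vec n -> Prop) (h : (vec n -> R) * R) : Prop := forall y, Y y -> fst h y = snd h.
Fixpoint phiL {n} (Y : vec n -> Prop) (l : list ((vec n -> R) * R)) (x : vec n) : R :=
  match l with [] => 0 | h :: l' => (if dec (Tt Y h) then fst h x else 0) + phiL Y l' x end.
Fixpoint ML {n} (Y : vec n -> Prop) (l : list ((vec n -> R) * R)) : R :=
  match l with [] => 0 | h :: l' => (if dec (Tt Y h) then snd h else 0) + ML Y l' end.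

Lemma phiL_lin {n} Y (l : list ((vec n -> R) * R)) : (forall h, In h l -> linear_functional (fst h)) ->
  linear_functional (phiL Y l).
Proof. induction l as [|h l IH]; intros H; split; intros; simpl; try ring.
 - destruct (IH (fun h' Hh' => H h' (or_intror Hh'))) as [IH1 IH2].
   rewrite IH1. destruct (dec (Tt Y h)). destruct (H h (or_introl eq_refl)) as [H1 H2]. rewrite H1; ring. ring.
 - destruct (IH (fun h' Hh' => H h' (or_intror Hh'))) as [IH1 IH2].
   rewrite IH2. destruct (dec (Tt Y h)). destruct (H h (or_introl eq_refl)) as [H1 H2]. rewrite H2; ring. ring.
Qed.

Lemma phiL_le {n} Y (l : list ((vec n -> R) * R)) x : (forall h, In h l -> fst h x <= snd h) -> phiL Y l x <= ML Y l.
Proof. induction l as [|h l IH]; intros H; simpl. lra.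
 assert (phiL Y l x <= ML Y l) by (apply IH; intros; apply H; right; auto). destruct (dec (Tt Y h)). assert (fst h x <= snd h) by (apply H; left; auto). lra. lra. Qed.

Lemma phiL_eq {n} Y (l : list ((vec n -> R) * R)) x : (forall h, In h l -> fst h x <= snd h) ->
  phiL Y l x = ML Y l -> forall h, In h l -> Tt Y h -> fst h x = snd h.
Proof. induction l as [|h l IH]; intros H He h' Hh' Ht. destruct Hh'.
 simpl in He. assert (H' : forall h, In h l -> fst h x <= snd h) by (intros; apply H; right; auto).
 assert (phiL Y l x <= ML Y l) by (apply phiL_le; auto).
 assert (fst h x <= snd h) by (apply H; left; auto).
 destruct (dec (Tt Y h)) as [Th|Th].
 - destruct Hh' as [Hh'|Hh'].
   + subst. lra.
   + apply IH; auto. lra.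
 - destruct Hh' as [Hh'|Hh']. subst. contradiction. apply IH; auto. lra.
Qed.

Lemma phiL_Y {n} Y (l : list ((vec n -> R) * R)) y : Y y -> phiL Y l y = ML Y l.
Proof. intros Hy. induction l as [|h l IH]; simpl. auto. rewrite IH.
 destruct (dec (Tt Y h)). rewrite (t y Hy). auto. auto. Qed.

Lemma cexists F n (X Y : vec n -> Prop) (l : list ((vec n -> R) * R)) : is_subfield F ->
  (forall h, In h l -> linear_functional (fst h) /\ forall x, X x -> fst h x <= snd h) ->
  (exists y, Y y) -> subset Y X ->
  exists c, conv F Y c /\ forall h, In h l -> Tt Y h \/ fst h c < snd h.
Proof.
 intros HF. induction l as [|h l IH]; intros Hl [y0 Hy0] HYX.
 - exists y0. split. apply conv_single; auto. intros h [].
 - destruct IH as [c [Hc Hcl]]; eauto. intros h' Hh'; apply Hl; right; auto.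
   destruct (Hl h (or_introl eq_refl)) as [Hlin Hle].
   destruct (classic (Tt Y h)) as [Th|Th].
   + exists c. split; auto. intros h' [Hh'|Hh']. subst; left; auto. auto.
   + assert (Hex : exists y, Y y /\ fst h y < snd h).
     { apply NNPP; intros Hn. apply Th. intros y Hy. assert (fst h y <= snd h) by (apply Hle; auto).
       destruct (Req_dec (fst h y) (snd h)); auto. exfalso; apply Hn; exists y; split; auto; lra. }
     destruct Hex as [y [Hy Hhy]].
     exists (vadd (vscale (/2) c) (vscale (/2) y)). split.
     * destruct Hc as [Lc [HLc [HLcs HLcc]]]. exists (sc (/2) Lc ++ [(/2, y)]). split; [|split].
       -- apply Forall_app. split.
          ++ unfold sc. apply Forall_map. eapply Forall_impl; [|exact HLc]. simpl. intros p [H1 [H2 H3]].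
             split; auto. split. fsolve HF. nra.
          ++ constructor; [|constructor]. simpl. split; auto. split. fsolve HF. lra.
       -- rewrite coefsum_app, coefsum_sc, HLcs. unfold coefsum; simpl; field.
       -- rewrite lincomb_app, lincomb_sc, lincomb_single, HLcc. reflexivity.
     * assert (Hch : forall h', In h' (h :: l) -> fst h' c <= snd h').
       { intros h' Hh'. destruct (Hl h' Hh') as [Hl1 Hl2]. apply (conv_le F n (fst h') Y (snd h') c Hl1); auto. }
       intros h' Hh'. destruct (Hl h' Hh') as [Hl1 Hl2]. rewrite lf_vadd by auto.
       assert (fst h' y <= snd h') by (apply Hl2; auto). assert (fst h' c <= snd h') by auto.
       destruct Hh' as [Hh'|Hh'].
       -- subst. right. lra.
       -- destruct (Hcl h' Hh') as [T'|T']. left; auto. right; lra.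
Qed.

Lemma allR_sub : is_subfield allR.
Proof. unfold is_subfield, allR. repeat split; intros; exact I. Qed.

Lemma key n F (X Y : vec n -> Prop) (hs : list ((vec n -> R) * R)) (c x : vec n) :
  is_subfield F -> (forall x, X x -> forall i, F (x i)) ->
  (forall h, In h hs -> linear_functional (fst h)) ->
  (forall v, conv allR (fun x => X x \/ x = vzero) v <-> (forall h, In h hs -> fst h v <= snd h)) ->
  pos_weak_face F X Y -> subset Y X ->
  conv F Y c -> (forall h, In h hs -> Tt Y h \/ fst h c < snd h) ->
  (X x \/ x = vzero) -> (forall h, In h hs -> Tt Y h -> fst h x = snd h) -> Y x.
Proof.
 intros HF HXF Hlin Hiff Hpos HYX Hc Hcl Hx Hxt.
 assert (HQ : forall p, X p \/ p = vzero -> forall i, F (p i)).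
 { intros p [Hp|Hp] i. auto. subst. unfold vzero. fsolve HF. }
 assert (HcF : forall i, F (c i)). { apply (conv_F_coords F n Y c HF); auto. }
 assert (Hct : forall h, In h hs -> Tt Y h -> fst h c = snd h).
 { intros h Hh Th. apply (conv_eq F n (fst h) Y (snd h) c); auto. }
 destruct (delta_list hs (fun h e => fst h (vadd (vscale (1+e) c) (vscale (-e) x)) <= snd h)) as [dl [Hdl Hdl2]].
 { intros h Hh. destruct (Hcl h Hh) as [Th|Th].
   - exists 1. split. lra. intros e He. rewrite lf_vadd by auto. rewrite Hct, Hxt by auto. lra.
   - set (A := Rabs (fst h c - fst h x)). assert (HA : 0 <= A) by apply Rabs_pos.
     assert (HA2 : fst h c - fst h x <= A) by apply Rle_abs.
     exists ((snd h - fst h c) / (A + 1)). split. apply Rdiv_lt_0_compat; lra.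
     intros e He. rewrite lf_vadd by auto.
     assert (E1 : e * (A+1) < (snd h - fst h c) / (A + 1) * (A + 1)) by (apply Rmult_lt_compat_r; lra).
     replace ((snd h - fst h c) / (A + 1) * (A + 1)) with (snd h - fst h c) in E1 by (field; lra).
     nra. }
 destruct (F_small F dl HF Hdl) as [e [HeF [He0 He1]]].
 set (d := vadd (vscale (1+e) c) (vscale (-e) x)).
 assert (Hd : conv allR (fun x => X x \/ x = vzero) d). { apply Hiff. intros h Hh. apply Hdl2; auto. }
 destruct Hd as [Ld [HLd [HLds HLdd]]].
 destruct (pipe F n (fun p => X p \/ p = vzero) (sc (/(1+e)) Ld ++ [(e/(1+e), x)]) c x (e/(1+e)) HF HQ)
   as [Lq [HQq [Hxq Hrel]]]; auto.
 - apply Forall_app. split.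
   + apply (Forall_sc (/(1+e)) Ld (fun p => X p \/ p = vzero)). left; apply Rinv_0_lt_compat; lra. eapply Forall_impl; [|exact HLd]. simpl; tauto.
   + constructor; [|constructor]. simpl. split; auto. apply Rmult_le_pos. lra. left; apply Rinv_0_lt_compat; lra.
 - rewrite coefsum_app, coefsum_sc, HLds. unfold coefsum; simpl. field. lra.
 - rewrite lincomb_app, lincomb_sc, lincomb_single, <- HLdd. apply vext; intros i. unfold d, vadd, vscale. field. lra.
 - apply in_or_app. right. left. auto.
 - apply Rdiv_lt_0_compat; lra.
 - destruct (classic (In vzero (map snd Lq))) as [Hz|Hz].
   + exfalso. destruct Hpos as [_ Hpos]. apply (Hpos (fun p => In p (map snd Lq) /\ X p)).
     * intros p [_ Hp]; auto.
     * exists c. split; auto.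
       replace (fun x0 => (In x0 (map snd Lq) /\ X x0) \/ x0 = vzero) with (fun p => In p (map snd Lq)); auto.
       apply set_ext. intros p. split.
       -- intros Hp. destruct (HQq p Hp) as [Hp'|Hp']. left; auto. right; auto.
       -- intros [[Hp _]|Hp]. auto. subst; auto.
   + destruct Hpos as [[_ Hwf] _]. apply (Hwf (fun p => In p (map snd Lq))); auto.
     * intros p Hp. destruct (HQq p Hp) as [Hp'|Hp']. auto. subst; contradiction.
     * exists c. split; auto.
Qed.

Lemma Y0 n F (X Y : vec n -> Prop) : is_subfield F -> pos_weak_face F X Y -> ~ Y vzero.
Proof. intros HF [_ Hpos] Hy. apply (Hpos (fun _ => False)). intros p [].
 exists vzero. split. apply conv_single; auto.
 replace (fun x : vec n => False \/ x = vzero) with (fun p => In p (map snd [(1, @vzero n)])).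
 - apply Relint; auto.
   + constructor; [|constructor]. simpl. split. fsolve HF. lra.
   + unfold coefsum; simpl; ring.
   + rewrite lincomb_single. apply vext; intros i; unfold vscale, vzero; ring.
 - apply set_ext. intros p. simpl. split. intros [H|[]]. right; auto. intros [[]|H]. left; auto.
Qed.

Lemma hard_dir n F (X Y : vec n -> Prop) : is_subfield F -> (forall x, X x -> forall i, F (x i)) ->
  polyhedron (conv allR (fun x => X x \/ x = vzero)) -> subset Y X -> (exists y, Y y) ->
  pos_weak_face F X Y ->
  exists (phi : vec n -> R) (M : R),
        linear_functional phi /\ 0 < M /\
        (forall x, X x -> phi x <= M) /\ (exists x, X x /\ phi x = M) /\
        (forall x, Y x <-> (X x /\ phi x = M)).
Proof.
 intros HF HXF [hs [Hlin Hiff]] HYX [y0 Hy0] Hpos.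
 assert (HXP : forall x, X x -> forall h, In h hs -> fst h x <= snd h).
 { intros x Hx. apply Hiff. apply conv_single. apply allR_sub. left; auto. }
 assert (H0P : forall h, In h hs -> fst h vzero <= snd h).
 { apply Hiff. apply conv_single. apply allR_sub. right; auto. }
 assert (Hp1 : forall h, In h hs -> linear_functional (fst h) /\ forall x, X x -> fst h x <= snd h).
 { intros h Hh. split; auto. }
 destruct (cexists F n X Y hs HF Hp1 (ex_intro _ y0 Hy0) HYX) as [c [Hc Hcl]].
 assert (Hl : linear_functional (phiL Y hs)) by (apply phiL_lin; auto).
 assert (Hkey : forall x, (X x \/ x = vzero) -> phiL Y hs x = ML Y hs -> (forall h, In h hs -> fst h x <= snd h) -> Y x).
 { intros x Hx He Hle. apply (key n F X Y hs c x); auto. apply phiL_eq; auto. }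
 exists (phiL Y hs), (ML Y hs). split; [auto|split; [|split; [|split]]].
 - assert (H0 : phiL Y hs vzero <= ML Y hs) by (apply phiL_le; auto).
   rewrite lf_zero in H0 by auto. destruct (Req_dec 0 (ML Y hs)) as [E|E]; [|lra].
   exfalso. apply (Y0 n F X Y HF Hpos). apply Hkey; auto. rewrite lf_zero by auto. auto.
 - intros x Hx. apply phiL_le; auto.
 - exists y0. split; auto. apply phiL_Y; auto.
 - intros x. split.
   + intros Hx. split; auto. apply phiL_Y; auto.
   + intros [Hx He]. apply Hkey; auto.
Qed.

Definition substz {n} (R0 L : list (R * vec n)) : list (R * vec n) :=
  flat_map (fun p => if dec (snd p = vzero) then sc (fst p) R0 else [p]) L.

Lemma substz_ok {n} (R0 L : list (R * vec n)) : lincomb R0 = vzero -> coefsum R0 = 1 ->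
  coefsum (substz R0 L) = coefsum L /\ lincomb (substz R0 L) = lincomb L.
Proof. intros H1 H2. induction L as [|p L IH]. simpl; auto. unfold substz in *. simpl. destruct IH as [IH1 IH2].
 rewrite coefsum_app, lincomb_app, IH1, IH2. destruct (dec (snd p = vzero)) as [E|E].
 - rewrite coefsum_sc, lincomb_sc, H1, H2. unfold coefsum, lincomb; simpl. fold (@coefsum n L) (@lincomb n L). split. ring.
   rewrite E. apply vext; intros i. unfold vadd, vscale, vzero. ring.
 - unfold coefsum, lincomb; simpl. fold (@coefsum n L) (@lincomb n L). split. ring.
   apply vext; intros i. unfold vadd, vscale, vzero. ring.
Qed.

Lemma substz_forall {n} (X : vec n -> Prop) (R0 L : list (R * vec n)) :
  Forall (fun p => (X (snd p) \/ snd p = vzero) /\ 0 <= fst p) L -> Forall (fun p => X (snd p) /\ 0 <= fst p) R0 ->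
  Forall (fun p => X (snd p) /\ 0 <= fst p) (substz R0 L).
Proof. intros H1 H2. induction L as [|p L IH]. simpl; auto. apply Forall_cons_iff in H1. destruct H1 as [[Hp1 Hp2] HL].
 unfold substz in *. simpl. apply Forall_app. split; auto. destruct (dec (snd p = vzero)) as [E|E].
 - apply Forall_sc; auto.
 - constructor; auto. destruct Hp1; [split; auto|contradiction].
Qed.

Lemma part2_back n F (X Y : vec n -> Prop) : is_subfield F -> (forall x, X x -> forall i, F (x i)) ->
  relint allR (conv allR X) vzero -> subset Y X -> ~ (forall x, Y x <-> X x) -> weak_face F X Y -> pos_weak_face F X Y.
Proof.
 intros HF HXF H0rel HYX Hneq Hwf. split; auto. intros U HUX [v [Hv Hrel]]. apply Hneq. intros x. split; [apply HYX|intros Hx].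
 destruct (proj2 Hrel vzero (conv_single F n (fun x => U x \/ x = vzero) vzero HF (or_intror eq_refl))) as [z [s [Hz [Hs [Hs0 [Hs1 Hvz]]]]]].
 destruct (proj2 H0rel x (conv_single allR n X x allR_sub Hx)) as [z' [t [Hz' [_ [Ht0 [Ht1 H0z]]]]]].
 destruct Hz as [Lw [HLw [HLws HLwz]]]. destruct Hz' as [Lz [HLz [HLzs HLzz]]].
 set (R0 := (t, x) :: sc (1-t) Lz).
 assert (HR1 : lincomb R0 = vzero).
 { unfold R0. change ((t, x) :: sc (1 - t) Lz) with ([(t, x)] ++ sc (1 - t) Lz).
   rewrite lincomb_app, lincomb_sc, lincomb_single, <- HLzz. auto. }
 assert (HR2 : coefsum R0 = 1).
 { unfold R0. change ((t, x) :: sc (1 - t) Lz) with ([(t, x)] ++ sc (1 - t) Lz).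
   rewrite coefsum_app, coefsum_sc, HLzs. unfold coefsum; simpl; ring. }
 assert (HR3 : Forall (fun p => X (snd p) /\ 0 <= fst p) R0).
 { unfold R0. constructor. simpl. split; auto; lra. apply Forall_sc. lra.
   eapply Forall_impl; [|exact HLz]. simpl; tauto. }
 set (Lf := (s, vzero) :: sc (1-s) Lw).
 assert (Hf1 : lincomb Lf = v).
 { unfold Lf. change ((s, @vzero n) :: sc (1 - s) Lw) with ([(s, @vzero n)] ++ sc (1 - s) Lw).
   rewrite lincomb_app, lincomb_sc, lincomb_single, <- HLwz. auto. }
 assert (Hf2 : coefsum Lf = 1).
 { unfold Lf. change ((s, @vzero n) :: sc (1 - s) Lw) with ([(s, @vzero n)] ++ sc (1 - s) Lw).
   rewrite coefsum_app, coefsum_sc, HLws. unfold coefsum; simpl; ring. }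
 assert (Hf3 : Forall (fun p => (X (snd p) \/ snd p = vzero) /\ 0 <= fst p) Lf).
 { unfold Lf. constructor. simpl. split; auto; lra.
   apply (Forall_sc (1-s) Lw (fun p => X p \/ p = vzero)). lra.
   eapply Forall_impl; [|exact HLw]. simpl. intros p [[H1|H1] [H2 H3]]; split; auto. }
 destruct (substz_ok R0 Lf HR1 HR2) as [Hs1' Hs2'].
 assert (Hin : In (s * t, x) (substz R0 Lf)).
 { unfold substz, Lf. simpl. destruct (dec (@vzero n = vzero)) as [E|E]; [|congruence].
   apply in_or_app. left. unfold R0, sc. simpl. left. auto. }
 destruct (pipe F n X (substz R0 Lf) v x (s * t) HF HXF) as [Lq [HQq [Hxq Hrelq]]]; auto.
 - apply substz_forall; auto.
 - congruence.
 - congruence.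
 - apply (conv_F_coords F n Y v HF); auto.
 - nra.
 - destruct Hwf as [_ Hwf]. apply (Hwf (fun p => In p (map snd Lq))); auto.
   exists v; split; auto.
Qed.

Theorem theorem4p7 (n : nat) (F : R -> Prop) (X : vec n -> Prop)
  (hF : is_subfield F)
  (hXF : forall x, X x -> forall i, F (x i))
  (hpoly : polyhedron (conv allR (fun x => X x \/ x = vzero))) :
  (forall Y : vec n -> Prop, subset Y X -> (exists y, Y y) ->
     (pos_weak_face F X Y <->
      exists (phi : vec n -> R) (M : R),
        linear_functional phi /\ 0 < M /\
        (forall x, X x -> phi x <= M) /\ (exists x, X x /\ phi x = M) /\
        (forall x, Y x <-> (X x /\ phi x = M))))
  /\
  (relint allR (conv allR X) vzero ->
   forall Y : vec n -> Prop, subset Y X ->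
     (pos_weak_face F X Y <->
      (~ (forall x, Y x <-> X x)) /\ weak_face F X Y)).
Proof.
 split.
 - intros Y HYX Hne. split.
   + apply hard_dir; auto.
   + apply easy_dir; auto.
 - intros H0rel Y HYX. split.
   + intros Hpos. split; [|apply Hpos]. intros HYeq.
     destruct H0rel as [[L0 [HL0 [HL0s HL0v]]] _].
     destruct L0 as [|p L0']. { unfold coefsum in HL0s; simpl in HL0s; lra. }
     assert (Hxp : X (snd p)) by (apply Forall_cons_iff in HL0; apply HL0).
     destruct (hard_dir n F X Y hF hXF hpoly HYX) as [phi [M [Hl [HM [_ [_ HY]]]]]]; auto.
     { exists (snd p). apply HYeq; auto. }
     assert (E : phi (lincomb (p :: L0')) = coefsum (p :: L0') * M).
     { apply lf_eq; auto. eapply Forall_impl; [|exact HL0]. simpl. intros q [Hq _]. apply HY. apply HYeq; auto. }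
     rewrite <- HL0v, HL0s, lf_zero in E by auto. lra.
   + intros [Hneq Hwf]. apply part2_back; auto.
Qed.
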